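(* In any run of multi-agent dual policy iteration (defined in the context), let $\pi_h$ and $\pi$ denote the joint safety policy and the joint task policy at the end of an outer iteration. Then $$\{x\in\mathcal X: V_h^{\pi}(x)\ge0\}=\{x\in\mathcal X: V_h^{\pi_h}(x)\ge0\}=S_{\rm c}^{\rm new}.$$ These sets are non-decreasing with respect to inclusion across outer iterations. If the joint safety policies converge to $\pi_h^*$ (e.g. under the tie-breaking convention, in which case they are eventually constant), these sets eventually equal $S_{\rm c}^*:=\{x: V_h^{\pi_h^*}(x)\ge0\}$.
   Context: Setting. Let $\mathcal N=\{1,\dots,n\}$ be a finite set of agents, $\mathcal X$ a finite state space, $\mathcal U_i$ a finite action set for agent $i$, $\mathcal U=\prod_{i=1}^n\mathcal U_i$ the joint action space, $f:\mathcal X\times\mathcal U\to\mathcal X$ the deterministic dynamics, $r:\mathcal X\times\mathcal U\to\mathbb R$ a reward, $h:\mathcal X\to\mathbb R$ a constraint function, and $\gamma,\gamma_h\in(0,1)$ discount factors. An individual policy of agent $i$ is a map $\pi_i:\mathcal X\to\mathcal U_i$. A joint policy is $\pi=(\pi_1,\dots,\pi_n)$, with $\pi(x)=(\pi_1(x),\dots,\pi_n(x))$. For a joint action $u$ and an agent $i$, $(u_i',u_{-i})$ denotes $u$ with its $i$-th component replaced by $u_i'$. Safety value function. For a joint policy $\pi$, set $V_h^{\pi}(x)=\min_{t\in\mathbb N}\gamma_h^{t+1}h(x_t)$, where $x_0=x$ and $x_{t+1}=f(x_t,\pi(x_t))$. Value function. Along the same trajectory, set $V^{\pi}(x)=\sum_{t\ge0}\gamma^t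 r(x_t,\pi(x_t))$. Controlled invariant set. $S_{\rm c}^{\pi}=\{x: V_h^{\pi}(x)\ge0\}$. Invariant action set. For a joint policy $\pi_h$, a state $x$, and actions $u_{-i}$ of the agents other than $i$, set $\mathcal U_i^{\pi_h}(x,u_{-i})=\{u_i\in\mathcal U_i: V_h^{\pi_h}(f(x,(u_i,u_{-i})))\ge0\}$. Safety update step. Given the current joint safety policy $\pi_h$ and an ordering $i_1,\dots,i_n$ of $\mathcal N$: for each $x$ and $j=1,\dots,n$ in turn, replace $\pi_{h,i_j}(x)$ by an element of $\arg\max_{v\in\mathcal U_{i_j}}V_h^{\pi_h^{\rm old}}(f(x,w))$. Here $V_h^{\pi_h^{\rm old}}$ is computed for the policy before this step, and $w$ has component $i_j$ equal to $v$, components of earlier agents equal to their already-updated actions, and components of later agents equal to their old actions. Multi-agent dual policy iteration. Start from an initial joint safety policy $\pi_h$, an arbitrary initial joint task policy $\pi$, and $S_{\rm c}=\varnothing$. Each outer iteration consists of: (1) apply the safety update step $K\ge1$ times to $\pi_h$; (2) compute $V^{\pi}$ for the current task policy $\pi$; (3) for every $x\in\mathcal X\setminus S_{\rm c}$, set $\pi(x)\leftarrow\pi_h(x)$; (4) set $S_{\rm c}^{\rm new}=S_{\rm c}^{\pi_h}$; (5) choose an ordering $i_1,\dots,i_n$. For each $x\in S_{\rm c}^{\rm new}$ and $j=1,\dots,n$ in turn, set $$\pi^{\rm new}_{i_j}(x)\in\arg\max_{v\in\mathcal U_{i_j}^{\pi_h}(x,w^{(j)}_{-i_j})}\Big\{r\big(x,(v,w^{(j)}_{-i_j})\big)+\gamma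 V^{\pi}\big(f(x,(v,w^{(j)}_{-i_j}))\big)\Big\},$$ where $w^{(j)}_{-i_j}$ gives agents $i_l$ with $l<j$ their new actions $\pi^{\rm new}_{i_l}(x)$ and agents $i_l$ with $l>j$ their actions under $\pi$ after step (3). For $x\notin S_{\rm c}^{\rm new}$, $\pi^{\rm new}(x)$ is $\pi(x)$ after step (3). Then set $\pi\leftarrow\pi^{\rm new}$; (6) set $S_{\rm c}\leftarrow S_{\rm c}^{\rm new}$. Tie-breaking convention. In every argmax, if the agent's current action is a maximizer, it is selected. Otherwise, a maximizer is selected by a fixed deterministic rule. *)

(* Defs.v *)
From HB Require Import structures.
From mathcomp Require Import all_boot all_order all_algebra all_fingroup.
From mathcomp Require Import all_classical all_reals all_analysis.
Set Implicit Arguments. Unset Strict Implicit. Unset Printing Implicit Defensive.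
Import Order.TTheory GRing.Theory Num.Theory.
Local Open Scope ring_scope.

Section MADPI.
Variables (R : realType) (n : nat) (X : finType) (U : 'I_n -> finType).

Definition jact := forall i : 'I_n, U i.
Definition jpol := X -> jact.

(* (v, u_{-i}) : u with its i-th component replaced by v *)
Definition upd (u : jact) (i : 'I_n) (v : U i) : jact :=
  fun j => match i =P j with
           | ReflectT e => eq_rect i U v j e
           | ReflectF _ => u j
           end.

Variables (f : X -> jact -> X) (r : X -> jact -> R) (h : X -> R).

Definition traj (pi : jpol) (x : X) (t : nat) : X :=
  iter t (fun y => f y (pi y)) x.

Definition Vh (gh : R) (pi : jpol) (x : X) : R :=
  inf (range (fun t : nat => gh ^+ t.+1 * h (traj pi x t))).

Definition Vr (g : R) (pi : jpol) (x : X) : R :=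
  limn (fun N : nat =>
          \sum_(0 <= t < N) (g ^+ t * r (traj pi x t) (pi (traj pi x t)))).

Definition Sc (gh : R) (pi : jpol) : {set X} := [set x | 0 <= Vh gh pi x].

Definition is_argmax (A : finType) (P : pred A) (F : A -> R) (a : A) : Prop :=
  P a /\ forall b, P b -> F b <= F a.

(* the context w^{(j)}: agents i_l (l < j) take their new actions, the others
   their old ones; the ordering is i_l = s l *)
Definition mixw (s : {perm 'I_n}) (j : 'I_n) (new old : jact) : jact :=
  fun i => if ((s^-1)%g i < j)%N then new i else old i.

Definition safety_step (gh : R) (s : {perm 'I_n}) (pih pih' : jpol) : Prop :=
  forall (x : X) (j : 'I_n),
    is_argmax predT
      (fun v : U (s j) => Vh gh pih (f x (upd (mixw s j (pih' x) (pih x)) v)))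
      (pih' x (s j)).

Definition outer_step (g gh : R) (K : nat)
    (pih pi : jpol) (S : {set X}) (pih' pi' : jpol) (S' : {set X}) : Prop :=
  (exists p : nat -> jpol,
      p 0%N = pih /\ p K = pih' /\
      forall m, (m < K)%N -> exists s, safety_step gh s (p m) (p m.+1)) /\
  (* (2),(3),(5): V^pi of the task policy before (3); pi3 = pi after (3) *)
  let pi3 : jpol := fun x => if x \in S then pi x else pih' x in
  S' = Sc gh pih' /\
  exists s : {perm 'I_n},
    forall x : X,
      (x \in S' ->
         forall j : 'I_n,
           is_argmax
             (fun v : U (s j) =>
                0 <= Vh gh pih' (f x (upd (mixw s j (pi' x) (pi3 x)) v)))
             (fun v : U (s j) =>
                r x (upd (mixw s j (pi' x) (pi3 x)) v)
                + g * Vr g pi (f x (upd (mixw s j (pi' x) (pi3 x)) v)))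
             (pi' x (s j))) /\
      (x \notin S' -> forall i, pi' x i = pi3 x i).

(* a run: pihs k, pis k, Ss k are the safety policy, task policy and S_c after
   k outer iterations (k = 0: initial values, S_c = empty) *)
Definition madpi_run (g gh : R) (K : nat)
    (pihs pis : nat -> jpol) (Ss : nat -> {set X}) : Prop :=
  Ss 0%N = finset.set0 /\
  forall k, outer_step g gh K (pihs k) (pis k) (Ss k)
                              (pihs k.+1) (pis k.+1) (Ss k.+1).

End MADPI.

(* Main.v *)
Require Import Defs.
From HB Require Import structures.
From mathcomp Require Import all_boot all_order all_algebra all_fingroup.
From mathcomp Require Import all_classical all_reals all_analysis.
Import Order.TTheory GRing.Theory Num.Theory.
Local Open Scope ring_scope.

Section Helpers.
Variables (R : realType) (n : nat) (X : finType) (U : 'I_n -> finType).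
Variables (f : X -> jact U -> X) (h : X -> R) (gh : R).
Hypothesis Hgh : 0 < gh < 1.

Definition mixn (s : {perm 'I_n}) (m : nat) (new old : jact U) : jact U :=
  fun i => if ((s^-1)%g i < m)%N then new i else old i.

Lemma upd_same (u : jact U) i : upd (i:=i) u (u i) = u.
Proof.
apply: functional_extensionality_dep => k; rewrite /upd.
case: eqP => [e|//]. by destruct e.
Qed.

Lemma upd_mix s (j : 'I_n) (new old : jact U) :
  upd (i:=s j) (mixw s j new old) (new (s j)) = mixn s j.+1 new old.
Proof.
apply: functional_extensionality_dep => k; rewrite /upd /mixw /mixn.
case: eqP => [e|ne].
  destruct e => /=. by rewrite permK ltnSn.
have hne : ((s^-1)%g k == j :> nat) = false.
  apply/negbTE/eqP => /val_inj e; apply: ne; by rewrite -e permKV.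
by rewrite ltnS (leq_eqVlt ((s^-1)%g k)) hne.
Qed.

Lemma mixn0 s new old : mixn s 0 new old = old.
Proof. by apply: functional_extensionality_dep => k; rewrite /mixn ltn0. Qed.

Lemma mixnn s new old : mixn s n new old = new.
Proof. by apply: functional_extensionality_dep => k; rewrite /mixn ltn_ord. Qed.

Lemma Vh_ge0P pi x :
  0 <= Vh f h gh pi x <-> forall t, 0 <= h (traj f pi x t).
Proof.
case/andP: Hgh => g0 g1.
rewrite /Vh; split.
- move=> H t.
  have hl : has_lbound (range (fun t : nat => gh ^+ t.+1 * h (traj f pi x t))).
    exists (- \sum_y `|h y|) => _ [s _ <-].
    have : `|gh ^+ s.+1 * h (traj f pi x s)| <= \sum_y `|h y|.
      rewrite normrM.
      apply: (le_trans (y := `|h (traj f pi x s)|)).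
        rewrite -[X in _ <= X]mul1r ler_wpM2r //.
        by rewrite normrX ger0_norm ?(ltW g0) // exprn_ile1 ?(ltW g0) ?(ltW g1).
      by rewrite (bigD1 (traj f pi x s)) //= lerDl sumr_ge0.
    by rewrite ler_norml => /andP[].
  have := ge_inf hl (ex_intro2 _ _ t I erefl) => /(le_trans H).
  by rewrite pmulr_rge0 // exprn_gt0.
- move=> H; apply: lb_le_inf.
    by exists (gh ^+ 1 * h (traj f pi x 0)), 0%N.
  move=> _ [t _ <-]. by rewrite mulr_ge0 // exprn_ge0 // ltW.
Qed.

Lemma inSc pi x : (x \in Sc f h gh pi) <-> forall t, 0 <= h (traj f pi x t).
Proof. by rewrite inE; exact: Vh_ge0P. Qed.

Lemma traj_shift pi x t : traj f pi (f x (pi x)) t = traj f pi x t.+1.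
Proof. by rewrite /traj iterSr. Qed.

Lemma Sc_next pi x : x \in Sc f h gh pi -> f x (pi x) \in Sc f h gh pi.
Proof. move=> /inSc H; apply/inSc => t; by rewrite traj_shift. Qed.

Lemma invariance pi (Sinv : {set X}) :
  (forall x, x \in Sinv -> 0 <= h x /\ f x (pi x) \in Sinv) ->
  forall x, x \in Sinv -> x \in Sc f h gh pi.
Proof.
move=> HS x Hx; apply/inSc => t.
have : traj f pi x t \in Sinv.
  elim: t => [//|t IH]. exact: (HS _ IH).2.
by move/HS => [].
Qed.

Lemma step_mono s pih pih' :
  safety_step f h gh s pih pih' -> Sc f h gh pih \subset Sc f h gh pih'.
Proof.
move=> Hst; apply/fintype.subsetP => x Hx; apply: (invariance _ (Sc f h gh pih)) => //.
move=> y Hy; split; first by move/inSc: Hy => /(_ 0%N).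
have key : forall m, (m <= n)%N ->
  Vh f h gh pih (f y (pih y)) <= Vh f h gh pih (f y (mixn s m (pih' y) (pih y))).
  elim=> [_|m IH Hm]; first by rewrite mixn0.
  apply: (le_trans (IH (ltnW Hm))).
  have [_ Hmax] := Hst y (Ordinal Hm).
  set w := mixw s (Ordinal Hm) (pih' y) (pih y) in Hmax.
  have := Hmax (w (s (Ordinal Hm))) isT.
  by rewrite upd_same upd_mix /w.
have := key n (leqnn n); rewrite mixnn => Hle.
rewrite inE; apply: le_trans Hle.
by have := Sc_next _ _ Hy; rewrite inE.
Qed.

Lemma steps_mono K (p : nat -> jpol X U) :
  (forall m, (m < K)%N -> exists s, safety_step f h gh s (p m) (p m.+1)) ->
  Sc f h gh (p 0%N) \subset Sc f h gh (p K).
Proof.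
move=> H.
suff : forall m, (m <= K)%N -> Sc f h gh (p 0%N) \subset Sc f h gh (p m).
  by apply.
elim=> [//|m IH Hm].
apply: (fintype.subset_trans (IH (ltnW Hm))).
have [s Hs] := H m Hm. exact: step_mono Hs.
Qed.

End Helpers.

Theorem proposition3 (R : realType) (n : nat) (X : finType)
    (U : 'I_n -> finType) (f : X -> jact U -> X) (r : X -> jact U -> R)
    (h : X -> R) (g gh : R) (K : nat)
    (pihs pis : nat -> jpol X U) (Ss : nat -> {set X}) :
  0 < g < 1 -> 0 < gh < 1 -> (1 <= K)%N ->
  madpi_run f r h g gh K pihs pis Ss ->
  (* at the end of every outer iteration k+1: the three sets coincide *)
  (forall k : nat,
      Sc f h gh (pis k.+1) = Ss k.+1 /\ Sc f h gh (pihs k.+1) = Ss k.+1) /\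
  (* monotonicity across outer iterations *)
  (forall k : nat, Ss k.+1 \subset Ss k.+2) /\
  (* convergence *)
  (forall pih_star : jpol X U,
      (exists N, forall k, (N <= k)%N -> forall x i, pihs k x i = pih_star x i) ->
      exists M, forall k, (M <= k)%N -> Ss k.+1 = Sc f h gh pih_star).
Proof.
move=> _ Hgh _ [HS0 Hrun].
have inSc' := @inSc R n X U f h gh Hgh.
have Sc_next' := @Sc_next R n X U f h gh.
have HSc : forall k, Ss k.+1 = Sc f h gh (pihs k.+1).
  by move=> k; have [_ [-> _]] := Hrun k.
have mono1 : forall k, Ss k.+1 \subset Ss k.+2.
  move=> k; rewrite !HSc.
  have [[p [p0 [pK Hp]]] _] := Hrun k.+1.
  rewrite -p0 -pK; exact: steps_mono Hp.
have mono : forall k, Ss k \subset Ss k.+1.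
  by case=> [|k]; [rewrite HS0 finset.sub0set | exact: mono1].
split; last split => //.
- move=> k; split; last by rewrite HSc.
  have Hsub := mono k.
  have [_ [HS' [s Hs]]] := Hrun k.
  set pih' := pihs k.+1 in HS' Hs *.
  set pi' := pis k.+1 in Hs *.
  have Hout : forall x, x \notin Ss k.+1 -> pi' x = pih' x.
    move=> x Hx; apply: functional_extensionality_dep => i.
    rewrite ((Hs x).2 Hx i) /=.
    have -> : (x \in Ss k) = false.
      by apply/negP => /(fintype.subsetP Hsub); apply/negP.
    by [].
  have Hin : forall x, x \in Ss k.+1 -> f x (pi' x) \in Ss k.+1.
    move=> x Hx.
    have [n0|npos] := posnP n.
      have -> : pi' x = pih' x.
        apply: functional_extensionality_dep => i.
        by have := ltn_ord i; rewrite {2}n0.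
      by rewrite HS'; apply: Sc_next' => //; rewrite -HS'.
    have jlt : (n.-1 < n)%N by rewrite ltn_predL.
    have [Hc _] := (Hs x).1 Hx (Ordinal jlt).
    move: Hc; rewrite upd_mix /= prednK // mixnn => Hc.
    by rewrite HS' inE.
  apply/setP => x; apply/idP/idP.
  + move=> /inSc' Hx; apply/negPn/negP => Hn.
    suff : x \in Sc f h gh pih' by rewrite -HS' (negbTE Hn).
    apply/inSc' => t.
    elim: t x Hx Hn => [x Hx _|t IH x Hx Hn]; first exact: (Hx 0%N).
    rewrite -traj_shift -(Hout x Hn).
    have Hy : forall t, 0 <= h (traj f pi' (f x (pi' x)) t).
      by move=> t'; rewrite traj_shift.
    case: (boolP (f x (pi' x) \in Ss k.+1)) => Hfy.
    * move: Hfy; rewrite HS' => /inSc'; apply.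
    * have := IH _ Hy Hfy. by [].
  + move=> Hx; apply: (@invariance _ _ _ _ f h gh Hgh _ (Ss k.+1)) => // y Hy; split; last exact: Hin.
    by move: Hy; rewrite HS' => /inSc' /(_ 0%N).
- move=> ps [N HN]; exists N => k Hk.
  rewrite HSc.
  have -> : pihs k.+1 = ps => //.
  apply: functional_extensionality_dep => x.
  apply: functional_extensionality_dep => i.
  by apply: HN; apply: leqW.
Qed.
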